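(* Let $G$ be a finite group and let $S$ be the set of universal vertices of the power graph $\mathcal{P}(G)$, and suppose $|S|>1$. Then $G$ has an $n$-power-free decomposition (for some $n\geqslant1$) if and only if $G$ is isomorphic to a generalized quaternion group.
   Context: The power graph $\mathcal{P}(G)$ of a finite group $G$ has vertex set $G$, two distinct elements being adjacent when one is a power of the other; a universal vertex is one adjacent to all other vertices. An $n$-power-free decomposition of $G$ ($n\geqslant1$) is a partition $G=C\uplus B_1\uplus\cdots\uplus B_n$ of $G$ into a cyclic $p$-subgroup $C$ of maximal order (for some prime $p$) and $n$ nonempty subsets $B_1,\ldots,B_n$ such that each $B_i$ is an independent set (pairwise nonadjacent vertices) of $\mathcal{P}(G)$ and $|B_i|>1$ for each $i$. The generalized quaternion group of order $2^n$ ($n\geqslant3$) is $Q_{2^n}=\langle x,y\mid x^{2^{n-1}}=1,\ y^2=x^{2^{n-2}},\ x^y=x^{-1}\rangle$. *)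

(* Defs.v *)
From mathcomp Require Import all_boot all_fingroup all_solvable.
Set Implicit Arguments.
Unset Strict Implicit.
Unset Printing Implicit Defensive.
Local Open Scope group_scope.

Definition pg_adj (gT : finGroupType) (x y : gT) : bool :=
  (x != y) && ((x \in <[y]>) || (y \in <[x]>)).

Definition pg_universal (gT : finGroupType) (G : {set gT}) : {set gT} :=
  [set x in G | [forall y in G, (y != x) ==> pg_adj x y]].

Definition pg_independent (gT : finGroupType) (B : {set gT}) : bool :=
  [forall x in B, forall y in B, ~~ pg_adj x y].

Definition power_free_decomposition (gT : finGroupType) (G : {group gT})
    (n : nat) (C : {group gT}) (B : 'I_n -> {set gT}) : Prop :=
  [/\ C \subset G /\ cyclic C,
      (exists2 p, prime p & p.-group C /\
        (forall D : {group gT}, D \subset G -> cyclic D -> p.-group D ->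
           #|D| <= #|C|)),
      (forall i, B i \subset G /\ 1 < #|B i| /\ pg_independent (B i)),
      (forall i, [disjoint C & B i]) /\ (forall i j, i != j -> [disjoint B i & B j]) &
      C :|: \bigcup_(i < n) B i = G].

Definition has_n_power_free_decomposition (gT : finGroupType) (G : {group gT})
    : Prop :=
  exists n, 1 <= n /\ exists C B, @power_free_decomposition gT G n C B.

(* Main.v *)
Require Import Defs.
From mathcomp Require Import all_boot all_fingroup all_solvable zify.
From Stdlib Require Import Classical.
Set Implicit Arguments.
Unset Strict Implicit.
Unset Printing Implicit Defensive.
Local Open Scope group_scope.

Lemma univ_noncyclic_Q (gT : finGroupType) (G : {group gT}) (u : gT) :
  u \in G -> u != 1 -> (forall y, y \in G -> (y \in <[u]>) || (u \in <[y]>)) ->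
  ~~ cyclic G -> exists2 k, 3 <= k & G \isog 'Q_(2 ^ k).
Proof.
move=> Gu nu1 univ ncG.
have sUG : <[u]> \subset G by rewrite cycle_subG.
have [q [pq [h [Gh nUh qh]]]] : exists q, prime q /\ exists h, [/\ h \in G, h \notin <[u]> & q.-elt h].
  apply: NNPP => nex; case/negP: ncG.
  have eqG : <[u]> = G.
    apply/eqP; rewrite eqEcard sUG /= -orderE dvdn_leq //.
    apply/dvdn_partP => // r; rewrite mem_primes => /and3P[pr _ _].
    have [P sylP] := Sylow_exists r G.
    rewrite -(card_Hall sylP) [#[u]]orderE cardSg //.
    apply/subsetP => z Pz; apply: NNPP => nz; apply: nex; exists r; split => //.
    exists z; split => //; first exact: (subsetP (pHall_sub sylP)).
    - by apply/negP.
    - exact: mem_p_elt (pHall_pgroup sylP) Pz.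
  by rewrite -eqG cycle_cyclic.
have uh : u \in <[h]> by move: (univ h Gh); rewrite (negPf nUh).
have qu : q.-elt u by apply: mem_p_elt uh.
have ou1 : #[u] != 1%N by rewrite order_eq1.
have qG : q.-group G.
  apply/pgroupP => r pr rG.
  have [y Gy oy] := Cauchy pr rG.
  have ru : r %| #[u].
    case/orP: (univ y Gy) => [yU | uY].
      by rewrite -oy !orderE cardSg // cycle_subG.
    have : #[u] %| r by rewrite -oy !orderE cardSg // cycle_subG.
    by case/primeP: (pr) => _ /[apply] /orP [/eqP e|/eqP ->]; [rewrite e in ou1|].
  by rewrite -(pnatE _ pr); apply: pnat_dvd ru qu.
have ntG : G :!=: 1 by apply/trivgPn; exists u.
have O1 : 'Ohm_1(G) \subset <[u]>.
  rewrite (OhmE 1 qG) gen_subG; apply/subsetP => x; rewrite !inE => /andP[Gx].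
  rewrite expn1 => /eqP xq.
  case/orP: (univ x Gx) => // uX.
  have oxq : #[x] %| q by rewrite order_dvdn xq.
  have oux : #[u] %| #[x] by rewrite [#[x]]orderE order_dvdG.
  have ex : #[u] = #[x].
    move: oxq; case/primeP: (pq) => _ /[apply] /orP [/eqP e|/eqP e].
      by move: oux; rewrite e dvdn1 => /eqP e'; rewrite e' in ou1.
    rewrite e; move: oux; rewrite e; case/primeP: (pq) => _ /[apply] /orP [/eqP e'|/eqP ->] //.
    by rewrite e' in ou1.
  have : <[u]> = <[x]>.
    by apply/eqP; rewrite eqEcard cycle_subG uX -!orderE ex leqnn.
  by move=> E; have := cycle_id x; rewrite -E.
have oO : #|'Ohm_1(G)| = q.
  have -> : 'Ohm_1(G) = 'Ohm_1(<[u]>).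
    apply/eqP; rewrite eqEsubset (OhmS 1 sUG) andbT.
    by rewrite -{1}(Ohm_id 1 G) OhmS.
  apply: Ohm1_cyclic_pgroup_prime; first exact: cycle_cyclic.
    by rewrite /pgroup -orderE.
  by rewrite cycle_eq1.
move/(prime_Ohm1P qG ntG): oO; rewrite (negPf ncG) /= => /andP[_ /eqP].
case/quaternion_classP => k k2 iso; by exists k.
Qed.
Lemma Q_decomp (gT : finGroupType) (G : {group gT}) k :
  3 <= k -> G \isog 'Q_(2 ^ k) -> has_n_power_free_decomposition G.
Proof.
move=> k3 iso.
have k2 : 2 < k by [].
have [[x y] genG _] := generators_quaternion k2 iso.
have [[_ o4 _] _ [_ _ inv2 _ _] _ _] := quaternion_structure k2 genG iso.
have [oG Gx ox X'y] := genG.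
set X := <[x]> in o4 inv2 X'y *.
set D := G :\: X in o4 X'y *.
have sXG : X \subset G by rewrite cycle_subG.
have F2 : forall a, a \in D -> a^-1 \in D.
  by move=> a; rewrite !inE !groupV.
have F3 : forall a, a \in D -> a^-1 != a.
  move=> a Da; apply/eqP => e.
  have : #[a] %| 2 by rewrite order_dvdn expgS expg1 -{1}e mulVg.
  by rewrite o4.
have F4 : forall a b, a \in D -> b \in D -> a \in <[b]> -> a = b \/ a = b^-1.
  move=> a b Da Db /cycleP[i Ei]; subst a.
  rewrite [b^-1]invg_expg (o4 b Db) /=; rewrite -(expg_mod_order b i) (o4 b Db) in Da *.
  have := ltn_mod i 4; move: (i %% 4) Da => j Da.
  case: j Da => [|[|[|[|j]]]] Da //=; [move=> _ | by left | move=> _ | by right].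
  - by move: Da; rewrite expg0 !inE group1.
  - have ob : #[b ^+ 2] = 2 by rewrite orderXdiv (o4 b Db).
    have Gb : b ^+ 2 \in G by rewrite groupX //; case/setDP: Db.
    move: (inv2 _ Gb ob) => e; move: Da; rewrite e !inE mem_cycle /=.
    by [].
pose rk := fun a : gT => nat_of_ord (enum_rank a).
have rkne : forall a, a \in D -> rk a != rk a^-1.
  move=> a Da; apply/eqP => e; move/eqP: (F3 a Da); apply.
  by symmetry; apply: enum_rank_inj; apply: val_inj.
have indep : forall (R : nat -> nat -> bool), (forall m n, R m n -> R n m -> False) ->
    pg_independent [set a in D | R (rk a) (rk a^-1)].
  move=> R HR; apply/forallP => a; apply/implyP; rewrite inE => /andP[Da Ra].
  apply/forallP => c; apply/implyP; rewrite inE => /andP[Dc Rc].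
  rewrite /pg_adj; apply/negP => /andP[nab /orP[ab|ba]].
  - case: (F4 a c Da Dc ab) => e; first by rewrite e eqxx in nab.
    by rewrite e invgK in Ra; apply: (HR _ _ Ra Rc).
  - case: (F4 c a Dc Da ba) => e; first by rewrite e eqxx in nab.
    by rewrite e invgK in Rc; apply: (HR _ _ Ra Rc).
pose B1 := [set a in D | rk a < rk a^-1].
pose B2 := [set a in D | (fun m n => n < m) (rk a) (rk a^-1)].
have iB1 : pg_independent B1 by apply: (indep (fun m n => m < n)) => m n /= h1 h2; lia.
have iB2 : pg_independent B2 by apply: (indep (fun m n => n < m)) => m n /= h1 h2; lia.
have eB2 : B2 = B1^-1.
  by apply/setP => a; rewrite !inE invgK !groupV.
have dB : B1 :&: B2 = set0.
  apply/setP => a; rewrite !inE; apply/negP => /andP[/andP[_ h1] /andP[_ h2]]; lia.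
have uB : B1 :|: B2 = D.
  apply/setP => a; rewrite !inE; apply/idP/idP.
    by case/orP => /andP[].
  move=> Da; rewrite Da /=; have := rkne a; rewrite inE Da => /(_ isT); lia.
have ek : (2 ^ k = 2 * 2 ^ k.-1)%N by rewrite -expnS prednK // (leq_trans _ k3).
have e4 : 4 <= 2 ^ k.-1.
  have -> : 4 = (2 ^ 2)%N by [].
  by rewrite leq_exp2l //; lia.
have cD : #|D| = (2 ^ k.-1)%N.
  rewrite cardsD (setIidPr sXG) oG /X -orderE ox.
  lia.
have cB1 : 1 < #|B1|.
  have : #|D| = (#|B1| * 2)%N.
    by rewrite -uB cardsU dB cards0 subn0 eB2 card_invg; lia.
  rewrite cD; lia.
have cB2 : 1 < #|B2| by rewrite eB2 card_invg.
have sB1 : B1 \subset G by apply/subsetP => a; rewrite !inE => /andP[/andP[]].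
have sB2 : B2 \subset G by apply/subsetP => a; rewrite !inE => /andP[/andP[]].
exists 2; split => //.
exists <[x]>%G, (fun i : 'I_2 => if val i == 0 then B1 else B2).
split.
- by rewrite cycle_subG cycle_cyclic.
- exists 2 => //; split; first by rewrite /pgroup -orderE ox pnatX pnat_id.
  move=> E sEG /cyclicP[d Ed] _; rewrite Ed; rewrite Ed in sEG.
  have Gd : d \in G by rewrite -cycle_subG.
  rewrite -!orderE; case dX: (d \in X).
    by rewrite !orderE subset_leq_card // cycle_subG.
  rewrite (o4 d); last by rewrite inE dX.
  by rewrite ox.
- by case=> [[|[|i]] Hi] //=.
- split.
    move=> [[|[|i]] Hi] //=; rewrite -setI_eq0; apply/eqP/setP => a; rewrite !inE;
      by case: (a \in X); rewrite ?andbF.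
  move=> [[|[|i]] Hi] [[|[|j]] Hj] //= _; rewrite -setI_eq0 ?dB // setIC dB //.
apply/setP => a; rewrite inE; apply/idP/idP.
  case/orP => [aX | /bigcupP[[[|[|i]] Hi] _ aB]] //=; first exact: (subsetP sXG).
    exact: (subsetP sB1).
  exact: (subsetP sB2).
move=> Ga; case aX: (a \in X) => //=; apply/bigcupP.
have Da : a \in D by rewrite inE aX Ga.
case: (ltngtP (rk a) (rk a^-1)) => h.
- by exists (Ordinal (isT : 0 < 2)) => //=; rewrite inE Da.
- by exists (Ordinal (isT : 1 < 2)) => //=; rewrite inE Da.
- by move: (rkne a Da); rewrite h eqxx.
Qed.

Theorem corollary3p7 (gT : finGroupType) (G : {group gT}) :
  1 < #|pg_universal G| ->
  (has_n_power_free_decomposition G <->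
   exists2 k, 3 <= k & G \isog 'Q_(2 ^ k)).
Proof.
move=> hS; split; last by case=> k k3 iso; exact: Q_decomp iso.
case=> n [n1 [C [B [[sCG cC] _ hB [dC dB] cov]]]].
have /subsetPn[u uS nu] : ~~ (pg_universal G \subset [set 1]).
  apply: contraL hS => /subset_leq_card; rewrite cards1 => h.
  by rewrite -leqNgt.
rewrite in_set1 in nu.
move: uS; rewrite inE => /andP[Gu /forallP univ].
apply: (univ_noncyclic_Q Gu nu).
  move=> y Gy; have [->|nyu] := eqVneq y u; first by rewrite cycle_id orbT.
  move: (univ y); rewrite Gy nyu /= /pg_adj => /andP[_].
  by rewrite orbC.
apply/negP => /cyclicP[g eG].
have Gg : g \in G by rewrite eG cycle_id.
have gC : g \in C.
  move: Gg; rewrite -{1}cov inE => /orP[//|/bigcupP[i _ gB]].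
  have [sBG [cB iB]] := hB i.
  have /subsetPn[z zB zg] : ~~ (B i \subset [set g]).
    by apply: contraL cB => /subset_leq_card; rewrite cards1 -leqNgt.
  rewrite in_set1 in zg.
  move/forallP: iB => /(_ g); rewrite gB /= => /forallP /(_ z).
  rewrite zB /= /pg_adj eq_sym zg /=.
  have -> : z \in <[g]> by rewrite -eG (subsetP sBG).
  by rewrite orbT.
have sGC : G \subset C by rewrite eG cycle_subG.
pose i0 : 'I_n := Ordinal n1.
have [sBG [cB _]] := hB i0.
have : 0 < #|B i0| by apply: leq_trans cB.
rewrite card_gt0 => /set0Pn[z zB].
have zC : z \in C by apply: (subsetP sGC); apply: (subsetP sBG).
by rewrite (disjointFr (dC i0) zC) in zB.
Qed.
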